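(* Let $S\subset\mathbb{R}^2$, $s=(s_1,s_2)\in S$, and let $\ell(x,\xi)=\rho(\|x-\xi\|)$, where $\rho:[0,\infty)\to(0,1)$ is continuously differentiable. Consider $\xi_1,\dots,\xi_N\in\mathbb{R}^2$, $\xi_k=(\xi_{k,1},\xi_{k,2})$, constrained so that $\|\xi_k-s\|=\|\xi_m-s\|>0$ for all $k,m\in\{1,\dots,N\}$. Let $\theta_k=\mathrm{atan2}(\xi_{k,2}-s_2,\xi_{k,1}-s_1)$ and $r=\|\xi_1-s\|$, and let $$I(s;\xi_{1:N})=\sum_{k=1}^N\frac{\nabla_s\ell(s,\xi_k)\nabla_s\ell(s,\xi_k)^\top}{\ell(s,\xi_k)[1-\ell(s,\xi_k)]}$$ be the Fisher information matrix for $s$ from independent binary measurements at $\xi_1,\dots,\xi_N$ with detection probabilities $\ell(s,\xi_k)$. Then: (1) For any fixed $r>0$, $\det I(s;\xi_{1:N})$ is maximised (over $\theta_1,\dots,\theta_N$) if and only if $\sum_{k=1}^N\cos(2\theta_k)=0$ and $\sum_{k=1}^N\sin(2\theta_k)=0$. (2) Under the additional constraint $r\in[r_1,r_2]$ for some $0<r_1\le r_2$, for any fixed $\theta_1,\dots,\theta_N$, $\det I(s;\xi_{1:N})$ is maximised (over $r$) if and only if $r\in\operatorname*{argmax}_{x\in[r_1,r_2]}\frac{\rho'(x)^2}{\rho(x)[1-\rho(x)]}$. (3) Optimising jointly over $\theta_1,\dots,\theta_N\in\mathbb{R}$ and $r\in[r_1,r_2]$, $\det I(s;\xi_{1:N})$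 is maximised if and only if both $\sum_{k=1}^N\cos(2\theta_k)=\sum_{k=1}^N\sin(2\theta_k)=0$ and $r\in\operatorname*{argmax}_{x\in[r_1,r_2]}\frac{\rho'(x)^2}{\rho(x)[1-\rho(x)]}$.
   Context: Here $\xi_k=s+r(\cos\theta_k,\sin\theta_k)$, so the configuration is parametrised by $r$ and $\theta_1,\dots,\theta_N$. *)

(* Defs.v *)
From Stdlib Require Import Reals Lra.
From Coquelicot Require Import Coquelicot.
Open Scope R_scope.

Definition norm2 (v : R * R) : R := sqrt (fst v ^ 2 + snd v ^ 2).

Definition ell (rho : R -> R) (x xi : R * R) : R :=
  rho (norm2 (fst x - fst xi, snd x - snd xi)).

Definition grad_s (rho : R -> R) (s xi : R * R) : R * R :=
  (Derive (fun t => ell rho (t, snd s) xi) (fst s),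
   Derive (fun t => ell rho (fst s, t) xi) (snd s)).

Fixpoint rsum (f : nat -> R) (n : nat) : R :=
  match n with O => 0 | S m => rsum f m + f m end.

(* Fisher information matrix I(s; xi_{1:N}) (symmetric 2x2, entries I11 I12 I22),
   sensors indexed 0..N-1 *)
Definition fim_entry (rho : R -> R) (s : R * R) (xi : nat -> R * R) (N : nat)
  (a b : R * R -> R) : R :=
  rsum (fun k =>
          a (grad_s rho s (xi k)) * b (grad_s rho s (xi k)) /
          (ell rho s (xi k) * (1 - ell rho s (xi k)))) N.

Definition fim_det (rho : R -> R) (s : R * R) (xi : nat -> R * R) (N : nat) : R :=
  fim_entry rho s xi N fst fst * fim_entry rho s xi N snd snd
  - fim_entry rho s xi N fst snd * fim_entry rho s xi N snd fst.

Definition config (s : R * R) (r : R) (theta : nat -> R) (k : nat) : R * R :=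
  (fst s + r * cos (theta k), snd s + r * sin (theta k)).

Definition detI (rho : R -> R) (s : R * R) (N : nat) (r : R) (theta : nat -> R) : R :=
  fim_det rho s (config s r theta) N.

Definition hfun (rho : R -> R) (x : R) : R :=
  (Derive rho x) ^ 2 / (rho x * (1 - rho x)).

Definition in_argmax (rho : R -> R) (r1 r2 r : R) : Prop :=
  r1 <= r <= r2 /\ (forall x, r1 <= x <= r2 -> hfun rho x <= hfun rho r).

Definition sum_cos2 (N : nat) (theta : nat -> R) : R := rsum (fun k => cos (2 * theta k)) N.
Definition sum_sin2 (N : nat) (theta : nat -> R) : R := rsum (fun k => sin (2 * theta k)) N.

(* Main.v *)
Require Import Defs.
From Stdlib Require Import Reals Lra Lia.
From Coquelicot Require Import Coquelicot.
Open Scope R_scope.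

Lemma sum_cc N th : rsum (fun k => cos (th k) * cos (th k)) N = (INR N + sum_cos2 N th) / 2.
Proof. unfold sum_cos2. induction N; cbn [rsum]; [simpl; field|]. rewrite IHN, S_INR, cos_2a_cos. field. Qed.
Lemma sum_ss N th : rsum (fun k => sin (th k) * sin (th k)) N = (INR N - sum_cos2 N th) / 2.
Proof. unfold sum_cos2. induction N; cbn [rsum]; [simpl; field|]. rewrite IHN, S_INR, cos_2a_sin. field. Qed.
Lemma sum_cs N th : rsum (fun k => cos (th k) * sin (th k)) N = sum_sin2 N th / 2.
Proof. unfold sum_sin2. induction N; cbn [rsum]; [simpl; field|]. rewrite IHN, sin_2a. field. Qed.

Lemma tele_cos x n : 2 * sin x * rsum (fun k => cos (2 * (INR k * x))) n = sin ((2 * INR n - 1) * x) + sin x.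
Proof.
  induction n; cbn [rsum].
  - simpl. replace ((2*0-1)*x) with (-x) by ring. rewrite sin_neg. ring.
  - rewrite Rmult_plus_distr_l, IHn, S_INR.
    replace ((2 * (INR n + 1) - 1) * x) with (2 * (INR n * x) + x) by ring.
    replace ((2 * INR n - 1) * x) with (2 * (INR n * x) - x) by ring.
    rewrite sin_plus, sin_minus. ring.
Qed.

Lemma tele_sin x n : 2 * sin x * rsum (fun k => sin (2 * (INR k * x))) n = cos x - cos ((2 * INR n - 1) * x).
Proof.
  induction n; cbn [rsum].
  - simpl. replace ((2*0-1)*x) with (-x) by ring. rewrite cos_neg. ring.
  - rewrite Rmult_plus_distr_l, IHn, S_INR.
    replace ((2 * (INR n + 1) - 1) * x) with (2 * (INR n * x) + x) by ring.
    replace ((2 * INR n - 1) * x) with (2 * (INR n * x) - x) by ring.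
    rewrite cos_plus, cos_minus. ring.
Qed.

Definition theta0 (N : nat) (k : nat) : R := INR k * (PI / INR N).

Lemma theta0_bal N : (2 <= N)%nat -> sum_cos2 N (theta0 N) = 0 /\ sum_sin2 N (theta0 N) = 0.
Proof.
  intros HN. set (x := PI / INR N).
  assert (HN' : 2 <= INR N) by (replace 2 with (INR 2) by (simpl; ring); apply le_INR; lia).
  assert (Hx0 : 0 < x) by (unfold x; apply Rdiv_lt_0_compat; [exact PI_RGT_0 | lra]).
  assert (Hx1 : x < PI).
  { unfold x. apply (Rmult_lt_reg_r (INR N)); [lra|]. field_simplify; [|lra].
    pose proof PI_RGT_0. nra. }
  assert (Hs : sin x <> 0) by (apply Rgt_not_eq, sin_gt_0; auto).
  assert (E : (2 * INR N - 1) * x = - x + 2 * INR 1 * PI).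
  { unfold x. simpl. field. lra. }
  unfold sum_cos2, sum_sin2, theta0; fold x. split.
  - pose proof (tele_cos x N) as T. rewrite E, sin_period, sin_neg in T.
    apply (Rmult_eq_reg_l (2 * sin x)); [lra|]. lra.
  - pose proof (tele_sin x N) as T. rewrite E, cos_period, cos_neg in T.
    apply (Rmult_eq_reg_l (2 * sin x)); [lra|]. lra.
Qed.
Lemma rsum_ext f g n : (forall k, f k = g k) -> rsum f n = rsum g n.
Proof. intros H; induction n; simpl; [reflexivity| rewrite IHn, H; reflexivity]. Qed.

Lemma rsum_scal c f n : rsum (fun k => c * f k) n = c * rsum f n.
Proof. induction n; cbn [rsum]; [ring| rewrite IHn; ring]. Qed.

Lemma rsum_nonneg f n : (forall k, 0 <= f k) -> 0 <= rsum f n.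
Proof. intros H; induction n; simpl; [lra| specialize (H n); lra]. Qed.

Lemma rsum_ge_term f n k : (forall k, 0 <= f k) -> (k < n)%nat -> f k <= rsum f n.
Proof.
  intros H Hk; induction n; [lia|]. simpl.
  destruct (Nat.eq_dec k n).
  - subst. pose proof (rsum_nonneg f n H). lra.
  - assert (k < n)%nat by lia. specialize (IHn H0). specialize (H n). lra.
Qed.

Lemma lag_aux (a b : nat -> R) u v n :
  rsum (fun k => (a k * v - u * b k)^2) n =
    v * v * rsum (fun k => a k * a k) n + u * u * rsum (fun k => b k * b k) n
    - 2 * (u * v) * rsum (fun k => a k * b k) n.
Proof. induction n; cbn [rsum]; [ring| rewrite IHn; ring]. Qed.

Lemma lagrange (a b : nat -> R) n :
  rsum (fun k => a k * a k) n * rsum (fun k => b k * b k) n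
  - rsum (fun k => a k * b k) n * rsum (fun k => a k * b k) n
  = rsum (fun m => rsum (fun k => (a k * b m - a m * b k)^2) m) n.
Proof.
  induction n; cbn [rsum]; [ring|].
  rewrite <- IHn. rewrite lag_aux. ring.
Qed.
Lemma deriv_norm (rho : R -> R) (p b x : R) :
  0 < (x - p)^2 + b^2 -> ex_derive rho (sqrt ((x - p)^2 + b^2)) ->
  Derive (fun t => rho (sqrt ((t - p)^2 + b^2))) x =
  Derive rho (sqrt ((x - p)^2 + b^2)) * ((x - p) / sqrt ((x - p)^2 + b^2)).
Proof.
  intros H1 H2.
  apply is_derive_unique.
  auto_derive.
  - repeat split.
    + replace ((x + - p) * ((x + - p) * 1) + b * (b * 1)) with ((x - p)^2 + b^2) by ring. exact H2.
    + replace ((x + - p) * ((x + - p) * 1) + b * (b * 1)) with ((x - p)^2 + b^2) by ring. exact H1.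
  - replace ((x + - p) * ((x + - p) * 1) + b * (b * 1)) with ((x - p)^2 + b^2) by ring.
    change (fun x0 : R => rho x0) with rho. field. apply Rgt_not_eq. apply sqrt_lt_R0. exact H1.
Qed.

Lemma deriv_norm2 (rho : R -> R) (p b x : R) :
  0 < b^2 + (x - p)^2 -> ex_derive rho (sqrt (b^2 + (x - p)^2)) ->
  Derive (fun t => rho (sqrt (b^2 + (t - p)^2))) x =
  Derive rho (sqrt (b^2 + (x - p)^2)) * ((x - p) / sqrt (b^2 + (x - p)^2)).
Proof.
  intros H1 H2.
  rewrite (Derive_ext _ (fun t => rho (sqrt ((t - p)^2 + b^2)))).
  2:{ intro t. now rewrite Rplus_comm. }
  rewrite Rplus_comm. apply deriv_norm; rewrite Rplus_comm; auto.
Qed.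

Lemma sqrt_r (r c d : R) : 0 < r -> c^2 + d^2 = 1 ->
  sqrt ((- (r * c))^2 + (- (r * d))^2) = r.
Proof.
  intros Hr H.
  replace ((- (r * c))^2 + (- (r * d))^2) with (r^2) by
    (replace (r^2) with (r^2 * (c^2+d^2)) by (rewrite H; ring); ring).
  apply sqrt_pow2; lra.
Qed.

Lemma ell_config rho s r theta k : 0 < r ->
  ell rho s (config s r theta k) = rho r.
Proof.
  intros Hr. unfold ell, config, norm2; simpl.
  f_equal.
  replace (fst s - (fst s + r * cos (theta k))) with (- (r * cos (theta k))) by ring.
  replace (snd s - (snd s + r * sin (theta k))) with (- (r * sin (theta k))) by ring.
  apply sqrt_r; auto. rewrite <- (sin2_cos2 (theta k)). unfold Rsqr. ring.
Qed.

Lemma grad_config rho s r theta k : 0 < r -> ex_derive rho r ->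
  grad_s rho s (config s r theta k) =
  (- Derive rho r * cos (theta k), - Derive rho r * sin (theta k)).
Proof.
  intros Hr Hd.
  assert (Hcs : cos (theta k) ^ 2 + sin (theta k) ^ 2 = 1).
  { rewrite <- (sin2_cos2 (theta k)). unfold Rsqr. ring. }
  assert (E1 : (fst s - (fst s + r * cos (theta k))) = - (r * cos (theta k))) by ring.
  assert (E2 : (snd s - (snd s + r * sin (theta k))) = - (r * sin (theta k))) by ring.
  assert (Hq : sqrt ((- (r * cos (theta k)))^2 + (- (r * sin (theta k)))^2) = r)
    by (apply sqrt_r; auto).
  assert (Hpos : 0 < (- (r * cos (theta k)))^2 + (- (r * sin (theta k)))^2).
  { replace ((- (r * cos (theta k)))^2 + (- (r * sin (theta k)))^2) with (r^2 * (cos (theta k) ^ 2 + sin (theta k) ^ 2)) by ring.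
    rewrite Hcs. nra. }
  assert (Hq' : sqrt ((- (r * cos (theta k)))^2 + (- (r * sin (theta k)))^2) = r) by exact Hq.
  rewrite (Rplus_comm ((- (r * cos (theta k)))^2)) in Hq'.
  unfold grad_s, ell, config, norm2; cbn [fst snd]. f_equal.
  - rewrite deriv_norm; rewrite E1, ?E2.
    + rewrite Hq. field. lra.
    + exact Hpos.
    + rewrite Hq. exact Hd.
  - rewrite deriv_norm2; rewrite E2, ?E1.
    + rewrite Hq. field. lra.
    + lra.
    + rewrite Hq. exact Hd.
Qed.

Definition Dq (N : nat) (th : nat -> R) : R :=
  rsum (fun k => cos (th k) * cos (th k)) N * rsum (fun k => sin (th k) * sin (th k)) N
  - rsum (fun k => cos (th k) * sin (th k)) N * rsum (fun k => cos (th k) * sin (th k)) N.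

Lemma Dq_CS N th : Dq N th = (INR N ^ 2 - sum_cos2 N th ^ 2 - sum_sin2 N th ^ 2) / 4.
Proof. unfold Dq. rewrite sum_cc, sum_ss, sum_cs. field. Qed.

Lemma detI_eq rho s N r th : 0 < r -> ex_derive rho r -> 0 < rho r < 1 ->
  detI rho s N r th = hfun rho r ^ 2 * Dq N th.
Proof.
  intros Hr Hd H01.
  assert (Hne : rho r * (1 - rho r) <> 0) by (apply Rgt_not_eq; nra).
  assert (T : forall (a b : R * R -> R) (fa fb : R -> R -> R),
    (forall u v, a (u, v) = fa u v) -> (forall u v, b (u, v) = fb u v) ->
    (forall c u v, fa (c * u) (c * v) = c * fa u v) -> (forall c u v, fb (c * u) (c * v) = c * fb u v) ->
    fim_entry rho s (config s r th) N a b =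
    hfun rho r * rsum (fun k => fa (cos (th k)) (sin (th k)) * fb (cos (th k)) (sin (th k))) N).
  { intros a b fa fb Ha Hb Hfa Hfb. unfold fim_entry. rewrite <- rsum_scal. apply rsum_ext. intro k.
    rewrite grad_config, ell_config by auto. rewrite Ha, Hb.
    rewrite Hfa, Hfb. unfold hfun. field. lra. }
  unfold detI, fim_det, Dq.
  rewrite (T fst fst (fun u v => u) (fun u v => u)), (T snd snd (fun u v => v) (fun u v => v)),
    (T fst snd (fun u v => u) (fun u v => v)), (T snd fst (fun u v => v) (fun u v => u)); auto.
  rewrite (rsum_ext (fun k => sin (th k) * cos (th k)) (fun k => cos (th k) * sin (th k)))
    by (intro; ring).
  ring.
Qed.

Lemma Dq_pos N th k m : (k < N)%nat -> (m < N)%nat -> sin (th k - th m) <> 0 -> 0 < Dq N th.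
Proof.
  intros Hk Hm Hs.
  assert (gen : forall k m, (k < m)%nat -> (m < N)%nat -> sin (th m - th k) <> 0 -> 0 < Dq N th).
  { clear k m Hk Hm Hs. intros k m Hkm Hm Hs.
    unfold Dq. rewrite lagrange.
    set (F := fun m0 => rsum (fun k0 => (cos (th k0) * sin (th m0) - cos (th m0) * sin (th k0)) ^ 2) m0).
    assert (Fnn : forall j, 0 <= F j).
    { intro j. unfold F. apply rsum_nonneg. intro. apply pow2_ge_0. }
    apply Rlt_le_trans with (F m); [|apply rsum_ge_term; auto].
    unfold F.
    eapply Rlt_le_trans; [|apply (rsum_ge_term (fun k0 => _) m k); auto; intro; apply pow2_ge_0].
    cbv beta. rewrite sin_minus in Hs.
    replace (cos (th k) * sin (th m) - cos (th m) * sin (th k)) with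
      (sin (th m) * cos (th k) - cos (th m) * sin (th k)) by ring.
    set (y := sin (th m) * cos (th k) - cos (th m) * sin (th k)) in *.
    assert (y * y > 0) by (apply Rsqr_pos_lt in Hs; unfold Rsqr in Hs; lra). simpl. lra. }
  destruct (Nat.lt_total k m) as [H|[H|H]].
  - apply (gen k m); auto. intro E. apply Hs. replace (th k - th m) with (- (th m - th k)) by ring.
    rewrite sin_neg, E. ring.
  - subst. replace (th m - th m) with 0 in Hs by ring. rewrite sin_0 in Hs. lra.
  - apply (gen m k); auto.
Qed.

Lemma hfun_nn rho x : 0 < rho x < 1 -> 0 <= hfun rho x.
Proof.
  intros H. unfold hfun. apply Rmult_le_pos; [apply pow2_ge_0|].
  apply Rlt_le, Rinv_0_lt_compat. nra.
Qed.

Lemma hfun_pos rho x : 0 < rho x < 1 -> Derive rho x <> 0 -> 0 < hfun rho x.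
Proof.
  intros H Hd. unfold hfun. apply Rmult_lt_0_compat.
  - apply Rsqr_pos_lt in Hd. unfold Rsqr in Hd. simpl. lra.
  - apply Rinv_0_lt_compat. nra.
Qed.

Lemma Dq_le N th : Dq N th <= INR N ^ 2 / 4.
Proof. rewrite Dq_CS. pose proof (pow2_ge_0 (sum_cos2 N th)). pose proof (pow2_ge_0 (sum_sin2 N th)). lra. Qed.

Lemma Dq_max N th : INR N ^ 2 / 4 <= Dq N th -> sum_cos2 N th = 0 /\ sum_sin2 N th = 0.
Proof.
  rewrite Dq_CS. intro H. set (a := sum_cos2 N th) in *. set (b := sum_sin2 N th) in *.
  split; nra.
Qed.

Lemma Dq_bal N th : sum_cos2 N th = 0 -> sum_sin2 N th = 0 -> Dq N th = INR N ^ 2 / 4.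
Proof. intros H1 H2. rewrite Dq_CS, H1, H2. field. Qed.

Theorem theorem5 (rho : R -> R) (s : R * R) (N : nat)
  (Hrho01 : forall x, 0 <= x -> 0 < rho x < 1)
  (Hder : forall x, 0 < x -> ex_derive rho x)
  (Hcont : forall x, 0 < x -> continuous (Derive rho) x) :
  (* (1) fixed r > 0, optimise over theta *)
  (forall (r : R) (theta : nat -> R),
      (2 <= N)%nat -> 0 < r -> Derive rho r <> 0 ->
      ((forall theta' : nat -> R, detI rho s N r theta' <= detI rho s N r theta) <->
       (sum_cos2 N theta = 0 /\ sum_sin2 N theta = 0)))
  /\
  (* (2) fixed theta, optimise over r in [r1, r2] *)
  (forall (r1 r2 : R) (theta : nat -> R),
      0 < r1 -> r1 <= r2 ->
      (exists k m, (k < N)%nat /\ (m < N)%nat /\ sin (theta k - theta m) <> 0) ->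
      forall r, r1 <= r <= r2 ->
      ((forall r', r1 <= r' <= r2 -> detI rho s N r' theta <= detI rho s N r theta) <->
       in_argmax rho r1 r2 r))
  /\
  (* (3) joint optimisation over theta and r in [r1, r2] *)
  (forall (r1 r2 : R),
      (2 <= N)%nat -> 0 < r1 -> r1 <= r2 ->
      (exists x, r1 <= x <= r2 /\ Derive rho x <> 0) ->
      forall (r : R) (theta : nat -> R), r1 <= r <= r2 ->
      ((forall (r' : R) (theta' : nat -> R), r1 <= r' <= r2 ->
          detI rho s N r' theta' <= detI rho s N r theta) <->
       (sum_cos2 N theta = 0 /\ sum_sin2 N theta = 0 /\ in_argmax rho r1 r2 r))).
Proof.
  assert (DE : forall r th, 0 < r -> detI rho s N r th = hfun rho r ^ 2 * Dq N th).
  { intros r th Hr. apply detI_eq; auto. apply Hrho01; lra. }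
  assert (HN : forall x, 0 < x -> 0 <= hfun rho x).
  { intros x Hx. apply hfun_nn, Hrho01; lra. }
  split; [|split].
  - intros r th HN2 Hr Hd.
    assert (Hh : 0 < hfun rho r) by (apply hfun_pos; auto; apply Hrho01; lra).
    assert (Hh2 : 0 < hfun rho r ^ 2) by (simpl; nra).
    split.
    + intro H. apply Dq_max. specialize (H (theta0 N)). rewrite !DE in H by auto.
      destruct (theta0_bal N HN2) as [B1 B2]. rewrite (Dq_bal _ _ B1 B2) in H.
      apply Rmult_le_reg_l in H; auto.
    + intros [B1 B2] th'. rewrite !DE by auto. rewrite (Dq_bal _ _ B1 B2).
      apply Rmult_le_compat_l; [lra| apply Dq_le].
  - intros r1 r2 th Hr1 Hr12 [k [m [Hk [Hm Hs]]]] r Hr.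
    assert (HD : 0 < Dq N th) by exact (Dq_pos N th k m Hk Hm Hs).
    split.
    + intros H. split; auto. intros x Hx. specialize (H x Hx).
      rewrite !DE in H by lra. apply Rmult_le_reg_r in H; auto.
      pose proof (HN x ltac:(lra)). pose proof (HN r ltac:(lra)). simpl in H. nra.
    + intros [_ H] r' Hr'. specialize (H r' Hr'). rewrite !DE by lra.
      apply Rmult_le_compat_r; [lra|].
      pose proof (HN r' ltac:(lra)). pose proof (HN r ltac:(lra)). simpl. nra.
  - intros r1 r2 HN2 Hr1 Hr12 [x [Hx Hdx]] r th Hr.
    destruct (theta0_bal N HN2) as [B1 B2].
    assert (Hx0 : 0 < hfun rho x) by (apply hfun_pos; auto; apply Hrho01; lra).
    assert (HNpos : 0 < INR N ^ 2 / 4).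
    { assert (2 <= INR N) by (replace 2 with (INR 2) by (simpl; ring); apply le_INR; lia). nra. }
    split.
    + intros H.
      pose proof (Dq_le N th) as Hle.
      pose proof (Dq_CS N th) as HCS.
      assert (Hr0 : 0 <= hfun rho r) by (apply HN; lra).
      assert (Hcmp : forall y, r1 <= y <= r2 -> hfun rho y <= hfun rho r).
      { intros y Hy. pose proof (H y (theta0 N) Hy) as H1. rewrite !DE, (Dq_bal _ _ B1 B2) in H1 by lra.
        assert (hfun rho r ^ 2 * Dq N th <= hfun rho r ^ 2 * (INR N ^ 2 / 4))
          by (apply Rmult_le_compat_l; [simpl; nra| lra]).
        assert (hfun rho y ^ 2 <= hfun rho r ^ 2) by (apply Rmult_le_reg_r with (INR N ^ 2 / 4); lra).
        pose proof (HN y ltac:(lra)). simpl in *. nra. }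
      assert (Hhr : 0 < hfun rho r) by (pose proof (Hcmp x Hx); lra).
      assert (B : sum_cos2 N th = 0 /\ sum_sin2 N th = 0).
      { apply Dq_max. pose proof (H r (theta0 N) Hr) as H1.
        rewrite !DE, (Dq_bal _ _ B1 B2) in H1 by lra.
        apply Rmult_le_reg_l in H1; auto. simpl; nra. }
      destruct B. repeat split; auto; lra.
    + intros [C1 [C2 [_ Ham]]] r' th' Hr'. rewrite !DE by lra. rewrite (Dq_bal _ _ C1 C2).
      specialize (Ham r' Hr'). pose proof (Dq_le N th') as Hle.
      pose proof (HN r' ltac:(lra)). pose proof (HN r ltac:(lra)).
      assert (0 <= Dq N th' \/ Dq N th' < 0) as [Hd|Hd] by lra.
      * apply Rle_trans with (hfun rho r' ^ 2 * (INR N ^ 2 / 4)).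
        -- apply Rmult_le_compat_l; [simpl; nra | lra].
        -- apply Rmult_le_compat_r; [lra | simpl; nra].
      * assert (0 <= hfun rho r ^ 2 * (INR N ^ 2 / 4)) by (simpl; nra).
        assert (hfun rho r' ^ 2 * Dq N th' <= 0) by (simpl; nra). lra.
Qed.
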